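(* For every integer $K\ge2$: $\eta(r,K,1)<1-\frac1K$ for all $r>1$, and $\lim_{r\to\infty}\eta(r,K,1)=1-\frac1K$. For every $r>1$: $\eta(r,K,1)\le\frac{\ln r}{1+\ln r}$ for all integers $K\ge 2$, and $\lim_{K\to\infty}\eta(r,K,1)=\frac{\ln r}{1+\ln r}$.
   Context: Single item auction with one buyer whose value takes values $0<x^1<\dots<x^K$ with probabilities $p^i>0$, $\sum_ip^i=1$. Let $t(x,p)=\max\{i: i\in\arg\max_{1\le k\le K}x^k\sum_{j=k}^Kp^j\}$. The efficiency loss ratio of the revenue-optimal auction is $\mathrm{ELR}_1(x,p)=\sum_{i=1}^{t(x,p)-1}p^ix^i/\sum_{i=1}^Kp^ix^i$. $\eta(r,K,1)$ is the supremum of $\mathrm{ELR}_1(x,p)$ over all such $p$ and all $x$ with $0<x^1<\dots<x^K\le rx^1$. *)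

(* Defs.v *)
From Stdlib Require Import Reals List.
From Coquelicot Require Import Coquelicot.
Open Scope R_scope.

(* sumR f m n = f m + f (m+1) + ... + f n  (0 if n < m). *)
Definition sumR (f : nat -> R) (m n : nat) : R :=
  fold_right (fun i acc => f i + acc) 0 (seq m (S n - m)).

(* amax f n = the LARGEST index k in {1,...,n} maximizing f k (n >= 1). *)
Fixpoint amax (f : nat -> R) (n : nat) : nat :=
  match n with
  | O => O
  | S O => 1%nat
  | S m => let a := amax f m in
           if Rle_dec (f a) (f (S m)) then S m else a
  end.

(* Values x^1..x^K and probabilities p^1..p^K (indices 1..K). *)
Definition revenue (x p : nat -> R) (K k : nat) : R := x k * sumR p k K.

Definition tidx (x p : nat -> R) (K : nat) : nat := amax (revenue x p K) K.

Definition ELR1 (x p : nat -> R) (K : nat) : R :=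
  sumR (fun i => p i * x i) 1 (tidx x p K - 1) / sumR (fun i => p i * x i) 1 K.

Definition admissible (r : R) (K : nat) (x p : nat -> R) : Prop :=
  (forall i, (1 <= i <= K)%nat -> 0 < p i) /\
  sumR p 1 K = 1 /\
  0 < x 1%nat /\
  (forall i, (1 <= i < K)%nat -> x i < x (S i)) /\
  x K <= r * x 1%nat.

Definition eta (r : R) (K : nat) : Rbar :=
  Lub_Rbar (fun e => exists x p, admissible r K x p /\ e = ELR1 x p K).

(* Main.v *)
Require Import Defs.
From Stdlib Require Import Reals List Lia Lra.
From Coquelicot Require Import Coquelicot.
Open Scope R_scope.

Lemma fr_shift (f : nat -> R) a l :
  fold_right (fun i acc => f i + acc) a l = fold_right (fun i acc => f i + acc) 0 l + a.
Proof. induction l as [|h l IH]; simpl; [ring| rewrite IH; ring]. Qed.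

Lemma sumR_nil f m n : (n < m)%nat -> sumR f m n = 0.
Proof. intros H; unfold sumR; replace (S n - m)%nat with 0%nat by lia; reflexivity. Qed.

Lemma sumR_first f m n : (m <= n)%nat -> sumR f m n = f m + sumR f (S m) n.
Proof.
  intros H; unfold sumR; replace (S n - m)%nat with (S (S n - S m)) by lia; reflexivity.
Qed.

Lemma sumR_last f m n : (m <= S n)%nat -> sumR f m (S n) = sumR f m n + f (S n).
Proof.
  intros H; unfold sumR; replace (S (S n) - m)%nat with (S (S n - m)) by lia.
  rewrite seq_S, fold_right_app. rewrite fr_shift. cbn [fold_right].
  replace (m + (S n - m))%nat with (S n) by lia. ring.
Qed.

Lemma sumR_const f c m n : (forall i, (m <= i <= n)%nat -> f i = c) ->
  sumR f m n = INR (S n - m) * c.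
Proof.
  remember (S n - m)%nat as k eqn:Hk. revert m Hk.
  induction k as [|k IH]; intros m Hk Hf.
  - rewrite sumR_nil by lia. simpl; ring.
  - rewrite sumR_first by lia. rewrite (IH (S m)) by (lia || (intros; apply Hf; lia)).
    rewrite Hf by lia. rewrite S_INR; ring.
Qed.

Lemma sumR_nonneg f m n : (forall i, (m <= i <= n)%nat -> 0 <= f i) -> 0 <= sumR f m n.
Proof.
  remember (S n - m)%nat as k eqn:Hk. revert m Hk.
  induction k as [|k IH]; intros m Hk Hf.
  - rewrite sumR_nil by lia. lra.
  - rewrite sumR_first by lia.
    assert (0 <= f m) by (apply Hf; lia).
    assert (0 <= sumR f (S m) n) by (apply IH; [lia| intros; apply Hf; lia]). lra.
Qed.

Lemma sumR_pos f m n : (m <= n)%nat -> (forall i, (m <= i <= n)%nat -> 0 < f i) -> 0 < sumR f m n.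
Proof.
  intros H Hf. rewrite sumR_first by lia.
  assert (0 < f m) by (apply Hf; lia).
  assert (0 <= sumR f (S m) n) by (apply sumR_nonneg; intros; left; apply Hf; lia). lra.
Qed.

Lemma sumR_split g K j : (1 <= j <= S K)%nat -> sumR g 1 K = sumR g 1 (j - 1) + sumR g j K.
Proof.
  induction j as [|j IH]; intros H; [lia|].
  destruct j as [|j].
  - change (S 0 - 1)%nat with 0%nat. rewrite (sumR_nil g 1 0) by lia. ring.
  - rewrite IH by lia. rewrite (sumR_first g (S j) K) by lia.
    replace (S (S j) - 1)%nat with (S j) by lia.
    replace (S j - 1)%nat with j by lia.
    rewrite sumR_last by lia. ring.
Qed.

Lemma amax_spec f n : (1 <= n)%nat ->
  (1 <= amax f n <= n)%nat /\ forall k, (1 <= k <= n)%nat -> f k <= f (amax f n).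
Proof.
  induction n as [|n IH]; intros H; [lia|].
  destruct n as [|n].
  - simpl. split; [lia|]. intros k Hk. replace k with 1%nat by lia. lra.
  - destruct IH as [[H1 H2] H3]; [lia|].
    change (amax f (S (S n))) with
      (if Rle_dec (f (amax f (S n))) (f (S (S n))) then S (S n) else amax f (S n)).
    destruct (Rle_dec (f (amax f (S n))) (f (S (S n)))) as [Hl|Hl].
    + split; [lia|]. intros k Hk. destruct (Nat.eq_dec k (S (S n))); [subst; lra|].
      specialize (H3 k ltac:(lia)). lra.
    + split; [lia|]. intros k Hk. destruct (Nat.eq_dec k (S (S n))); [subst; lra|].
      apply H3; lia.
Qed.

Lemma amax_const f c n : (1 <= n)%nat -> (forall k, (1 <= k <= n)%nat -> f k = c) -> amax f n = n.
Proof.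
  induction n as [|n IH]; intros H Hf; [lia|].
  destruct n as [|n]; [reflexivity|].
  change (amax f (S (S n))) with
      (if Rle_dec (f (amax f (S n))) (f (S (S n))) then S (S n) else amax f (S n)).
  rewrite IH by (lia || (intros; apply Hf; lia)).
  rewrite (Hf (S n)) by lia. rewrite (Hf (S (S n))) by lia.
  destruct (Rle_dec c c); [reflexivity| lra].
Qed.
Lemma frac_le a b c d : 0 < b -> 0 < d -> a * d <= c * b -> a / b <= c / d.
Proof.
  intros Hb Hd H.
  assert (c / d - a / b = (c * b - a * d) / (b * d)) by (field; lra).
  assert (0 <= (c * b - a * d) / (b * d)).
  { unfold Rdiv; apply Rmult_le_pos; [lra| left; apply Rinv_0_lt_compat; nra]. }
  lra.
Qed.

Lemma frac_lt a b c d : 0 < b -> 0 < d -> a * d < c * b -> a / b < c / d.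
Proof.
  intros Hb Hd H.
  assert (c / d - a / b = (c * b - a * d) / (b * d)) by (field; lra).
  assert (0 < (c * b - a * d) / (b * d)).
  { unfold Rdiv; apply Rmult_lt_0_compat; [lra| apply Rinv_0_lt_compat; nra]. }
  lra.
Qed.

Lemma ln_le_sub1 y : 0 < y -> ln y <= y - 1.
Proof.
  intros Hy. destruct (Req_dec (ln y) 0) as [E|E].
  - assert (y = 1). { rewrite <- (exp_ln y Hy), E, exp_0. reflexivity. } lra.
  - pose proof (exp_ineq1 _ E). rewrite exp_ln in H by lra. lra.
Qed.

Section Upper.
Variables (r : R) (K : nat) (x p : nat -> R).
Hypothesis HK : (1 <= K)%nat.
Hypothesis Had : admissible r K x p.

Let px := fun i => p i * x i.
Let t := tidx x p K.
Let Rv := revenue x p K t.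

Lemma mono : forall i j, (1 <= i <= j)%nat -> (j <= K)%nat -> x i <= x j.
Proof.
  destruct Had as (_ & _ & _ & Hinc & _).
  intros i j. induction j as [|j IH]; intros H1 H2; [lia|].
  destruct (Nat.eq_dec i (S j)); [subst; lra|].
  assert (x i <= x j) by (apply IH; lia).
  assert (x j < x (S j)) by (apply Hinc; lia). lra.
Qed.

Lemma xpos : forall i, (1 <= i <= K)%nat -> 0 < x i.
Proof.
  intros i Hi. destruct Had as (_ & _ & H1 & _).
  pose proof (mono 1 i ltac:(lia) ltac:(lia)). lra.
Qed.

Lemma Spos : forall j, (1 <= j <= K)%nat -> 0 < sumR p j K.
Proof.
  intros j Hj. destruct Had as (Hp & _).
  apply sumR_pos; [lia|]. intros; apply Hp; lia.
Qed.

Lemma Snn : forall j, (1 <= j)%nat -> 0 <= sumR p j K.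
Proof.
  intros j Hj. destruct Had as (Hp & _).
  apply sumR_nonneg. intros; left; apply Hp; lia.
Qed.

Lemma t_spec : (1 <= t <= K)%nat /\ forall k, (1 <= k <= K)%nat -> revenue x p K k <= Rv.
Proof. apply amax_spec; lia. Qed.

Lemma Rv_pos : 0 < Rv.
Proof.
  destruct t_spec as [Ht _]. unfold Rv, revenue.
  apply Rmult_lt_0_compat; [apply xpos | apply Spos]; lia.
Qed.

Lemma abel (F : nat -> R) :
  F 1%nat = 0 ->
  (forall j, (1 <= j < K)%nat -> (x (S j) - x j) / x (S j) <= F (S j) - F j) ->
  forall j, (1 <= j <= K)%nat -> sumR px 1 (j - 1) + sumR p j K * x j <= Rv * (1 + F j).
Proof.
  intros F1 Fs. destruct t_spec as [_ Hm].
  induction j as [|j IH]; intros Hj; [lia|].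
  destruct j as [|j].
  - change (S 0 - 1)%nat with 0%nat. rewrite sumR_nil by lia. rewrite F1.
    specialize (Hm 1%nat ltac:(lia)). unfold revenue in Hm. lra.
  - specialize (IH ltac:(lia)).
    replace (S (S j) - 1)%nat with (S j) by lia.
    replace (S j - 1)%nat with j in IH by lia.
    rewrite sumR_last by lia.
    rewrite (sumR_first p (S j) K) in IH by lia.
    specialize (Fs (S j) ltac:(lia)).
    specialize (Hm (S (S j)) ltac:(lia)). unfold revenue in Hm.
    assert (Hx1 : 0 < x (S (S j))) by (apply xpos; lia).
    assert (Hx0 : x (S j) < x (S (S j))) by (destruct Had as (_&_&_&Hi&_); apply Hi; lia).
    assert (E : sumR p (S (S j)) K * (x (S (S j)) - x (S j)) =
       (x (S (S j)) * sumR p (S (S j)) K) * ((x (S (S j)) - x (S j)) / x (S (S j))))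
      by (field; lra).
    assert (Hd : 0 <= (x (S (S j)) - x (S j)) / x (S (S j))).
    { unfold Rdiv; apply Rmult_le_pos; [lra| left; apply Rinv_0_lt_compat; lra]. }
    assert (sumR p (S (S j)) K * (x (S (S j)) - x (S j)) <=
            Rv * ((x (S (S j)) - x (S j)) / x (S (S j)))).
    { rewrite E. apply Rmult_le_compat_r; lra. }
    assert (Rv * ((x (S (S j)) - x (S j)) / x (S (S j))) <= Rv * (F (S (S j)) - F (S j))).
    { apply Rmult_le_compat_l; [left; apply Rv_pos| lra]. }
    unfold px at 2. nra.
Qed.

Lemma tail : forall k m, (S K - m)%nat = k -> (1 <= m)%nat -> x m * sumR p m K <= sumR px m K.
Proof.
  induction k as [|k IH]; intros m Hk Hm.
  - rewrite !sumR_nil by lia. lra.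
  - rewrite !(sumR_first _ m K) by lia.
    specialize (IH (S m) ltac:(lia) ltac:(lia)).
    assert (x m * sumR p (S m) K <= x (S m) * sumR p (S m) K).
    { destruct (Compare_dec.le_lt_dec (S m) K).
      - apply Rmult_le_compat_r; [apply Snn; lia| apply mono; lia].
      - rewrite sumR_nil by lia. lra. }
    unfold px at 1. lra.
Qed.

Lemma elr_bound (F : nat -> R) (B : R) :
  F 1%nat = 0 ->
  (forall j, (1 <= j < K)%nat -> (x (S j) - x j) / x (S j) <= F (S j) - F j) ->
  0 <= B -> F t <= B -> ELR1 x p K <= B / (1 + B).
Proof.
  intros F1 Fs HB HFt. destruct t_spec as [Ht Hm].
  pose proof (abel F F1 Fs t Ht) as Ha.
  unfold ELR1. fold px. fold t.
  set (L := sumR px 1 (t - 1)).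
  set (W := sumR px 1 K).
  assert (HW : W = L + sumR px t K) by (apply sumR_split; lia).
  pose proof (tail (S K - t) t eq_refl ltac:(lia)) as Ht2.
  assert (HR : Rv = x t * sumR p t K) by reflexivity.
  assert (HL : 0 <= L).
  { apply sumR_nonneg. intros i Hi. unfold px. destruct Had as (Hp&_).
    apply Rmult_le_pos; left; [apply Hp| apply xpos]; lia. }
  pose proof Rv_pos.
  assert (L <= Rv * F t) by (fold L in Ha; nra).
  assert (Rv * F t <= Rv * B) by (apply Rmult_le_compat_l; lra).
  apply frac_le; [lra| lra|].
  assert (B * W >= B * (L + Rv)) by (apply Rmult_ge_compat_l; lra).
  nra.
Qed.

End Upper.

Lemma upper1 r K x p : (1 <= K)%nat -> admissible r K x p -> 1 < r ->
  ELR1 x p K <= (INR (K - 1) * (1 - 1 / r)) / (1 + INR (K - 1) * (1 - 1 / r)).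
Proof.
  intros HK Had Hr.
  assert (Hc : 0 <= 1 - 1 / r).
  { assert (1 / r < 1 / 1) by (apply frac_lt; lra). rewrite Rdiv_1_r in H. lra. }
  destruct (t_spec K x p HK) as [Ht _].
  apply (elr_bound r K x p HK Had (fun j => INR (j - 1) * (1 - 1 / r))).
  - simpl. ring.
  - intros j Hj.
    cbv beta. replace (S j - 1)%nat with j by lia.
    assert (HI : INR j = INR (j - 1) + 1) by (rewrite <- S_INR; f_equal; lia). rewrite HI.
    assert (H1 : 0 < x j) by (apply (xpos r K x p HK Had); lia).
    assert (H2 : 0 < x (S j)) by (apply (xpos r K x p HK Had); lia).
    assert (H3 : x (S j) <= x K) by (apply (mono r K x p HK Had); lia).
    assert (H4 : x 1%nat <= x j) by (apply (mono r K x p HK Had); lia).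
    destruct Had as (_&_&_&_&H5).
    replace ((INR (j - 1) + 1) * (1 - 1 / r) - INR (j - 1) * (1 - 1 / r)) with ((r - 1) / r)
      by (field; lra).
    apply frac_le; [lra| lra| nra].
  - apply Rmult_le_pos; [apply pos_INR| lra].
  - apply Rmult_le_compat_r; [lra|]. apply le_INR; lia.
Qed.

Lemma upper2 r K x p : (1 <= K)%nat -> admissible r K x p -> 1 < r ->
  ELR1 x p K <= ln r / (1 + ln r).
Proof.
  intros HK Had Hr.
  assert (Hl : 0 < ln r) by (rewrite <- ln_1; apply ln_increasing; lra).
  destruct (t_spec K x p HK) as [Ht _].
  apply (elr_bound r K x p HK Had (fun j => ln (x j) - ln (x 1%nat))).
  - ring.
  - intros j Hj.
    assert (H1 : 0 < x j) by (apply (xpos r K x p HK Had); lia).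
    assert (H2 : 0 < x (S j)) by (apply (xpos r K x p HK Had); lia).
    pose proof (ln_le_sub1 (x j / x (S j)) ltac:(apply Rdiv_lt_0_compat; lra)) as H.
    rewrite ln_div in H by lra.
    replace ((x (S j) - x j) / x (S j)) with (1 - x j / x (S j)) by (field; lra).
    lra.
  - lra.
  - set (t := tidx x p K) in *.
    assert (H1 : 0 < x 1%nat) by (apply (xpos r K x p HK Had); lia).
    assert (H2 : 0 < x t) by (apply (xpos r K x p HK Had); lia).
    assert (H3 : x t <= x K) by (apply (mono r K x p HK Had); lia).
    destruct Had as (_&_&_&_&H5).
    assert (ln (x t) <= ln (r * x 1%nat)) by (apply ln_le; lra).
    rewrite ln_mult in H by lra. lra.
Qed.

Lemma exp_pow n u : exp u ^ n = exp (INR n * u).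
Proof.
  induction n as [|n IH]; simpl pow.
  - simpl. rewrite Rmult_0_l, exp_0. reflexivity.
  - rewrite IH, S_INR. replace ((INR n + 1) * u) with (INR n * u + u) by ring.
    rewrite exp_plus. ring.
Qed.

Lemma constr r K : 1 < r -> (2 <= K)%nat ->
  exists x p, admissible r K x p /\
    INR (K - 1) * ln r / (INR (K - 1) * ln r + INR (K - 1) + ln r) <= ELR1 x p K.
Proof.
  intros Hr HK.
  set (m := INR (K - 1)). set (a := ln r).
  assert (Hm : 1 <= m) by (unfold m; replace 1 with (INR 1) by reflexivity; apply le_INR; lia).
  assert (Ha : 0 < a) by (unfold a; rewrite <- ln_1; apply ln_increasing; lra).
  set (u := a / m). assert (Hu : 0 < u) by (unfold u; apply Rdiv_lt_0_compat; lra).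
  set (q := exp u).
  assert (Hq : 1 + u < q) by (apply exp_ineq1; lra).
  assert (Hqp : forall n, 0 < q ^ n) by (intros; apply pow_lt; lra).
  set (x := fun i : nat => q ^ (i - 1)).
  set (p := fun i : nat => if (i <? K)%nat then (1 - 1 / q) / q ^ (i - 1) else 1 / q ^ (K - 1)).
  assert (HS : forall k j, (S K - j = k)%nat -> (1 <= j <= K)%nat -> sumR p j K = 1 / q ^ (j - 1)).
  { induction k as [|k IH]; intros j Hk Hj; [lia|].
    rewrite sumR_first by lia.
    destruct (Nat.eq_dec j K) as [->|Hne].
    - rewrite sumR_nil by lia. unfold p. rewrite Nat.ltb_irrefl. ring.
    - rewrite (IH (S j)) by lia. unfold p.
      replace (j <? K)%nat with true by (symmetry; apply Nat.ltb_lt; lia).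
      replace (S j - 1)%nat with (S (j - 1)) by lia. simpl pow.
      specialize (Hqp (j - 1)%nat). field. lra. }
  assert (HSj : forall j, (1 <= j <= K)%nat -> sumR p j K = 1 / q ^ (j - 1))
    by (intros; eapply HS; [reflexivity| lia]).
  assert (HxK : x K = r).
  { unfold x, q. rewrite exp_pow. fold m. unfold u.
    replace (m * (a / m)) with a by (field; lra). unfold a. apply exp_ln. lra. }
  exists x, p. split.
  - split; [|split; [|split; [|split]]].
    + intros i Hi. unfold p. destruct (i <? K)%nat.
      * apply Rdiv_lt_0_compat; [|apply Hqp].
        assert (1 / q < 1 / 1) by (apply frac_lt; lra). rewrite Rdiv_1_r in H. lra.
      * apply Rdiv_lt_0_compat; [lra| apply Hqp].
    + rewrite HSj by lia. simpl. field.
    + unfold x. simpl. lra.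
    + intros i Hi. unfold x. replace (S i - 1)%nat with (S (i - 1)) by lia. simpl pow.
      specialize (Hqp (i - 1)%nat). nra.
    + rewrite HxK. unfold x. simpl. lra.
  - assert (Ht : tidx x p K = K).
    { unfold tidx. apply (amax_const _ 1); [lia|]. intros k Hk. unfold revenue.
      rewrite HSj by lia. unfold x. specialize (Hqp (k - 1)%nat). field. lra. }
    unfold ELR1. rewrite Ht.
    assert (HL : sumR (fun i => p i * x i) 1 (K - 1) = m * (1 - 1 / q)).
    { rewrite (sumR_const _ (1 - 1 / q)).
      - unfold m. f_equal. f_equal. lia.
      - intros i Hi. unfold p, x.
        replace (i <? K)%nat with true by (symmetry; apply Nat.ltb_lt; lia).
        specialize (Hqp (i - 1)%nat). field. lra. }
    assert (HW : sumR (fun i => p i * x i) 1 K = m * (1 - 1 / q) + 1).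
    { replace K with (S (K - 1)) at 1 by lia. rewrite sumR_last by lia.
      replace (S (K - 1)) with K by lia. rewrite HL. unfold p, x.
      rewrite Nat.ltb_irrefl. specialize (Hqp (K - 1)%nat). field. lra. }
    rewrite HL, HW.
    assert (Hlo : m * a / (m * a + m + a) = (m * u / (1 + u)) / (m * u / (1 + u) + 1)).
    { unfold u. field. repeat split; try lra. nra. }
    rewrite Hlo.
    assert (HA : m * u / (1 + u) <= m * (1 - 1 / q)).
    { replace (m * (1 - 1 / q)) with (m * (q - 1) / q) by (field; lra).
      apply frac_le; [lra| lra|]. nra. }
    assert (0 <= m * u / (1 + u)) by (apply Rdiv_le_0_compat; nra).
    apply frac_le; [lra| lra| nra].
Qed.

Lemma eta_bnd r K : 1 < r -> (2 <= K)%nat ->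
  exists e, eta r K = Finite e /\
    INR (K - 1) * ln r / (INR (K - 1) * ln r + INR (K - 1) + ln r) <= e /\
    e <= (INR (K - 1) * (1 - 1 / r)) / (1 + INR (K - 1) * (1 - 1 / r)) /\
    e <= ln r / (1 + ln r).
Proof.
  intros Hr HK.
  set (E := fun e => exists x p, admissible r K x p /\ e = ELR1 x p K).
  change (eta r K) with (Lub_Rbar E).
  destruct (Lub_Rbar_correct E) as [Hub Hlub].
  destruct (constr r K Hr HK) as (x & p & Had & Hlo).
  assert (HE : E (ELR1 x p K)) by (exists x, p; auto).
  pose proof (Hub _ HE) as H0.
  assert (H1 : Rbar_le (Lub_Rbar E) (Finite ((INR (K - 1) * (1 - 1 / r)) / (1 + INR (K - 1) * (1 - 1 / r))))).
  { apply Hlub. intros e (x' & p' & Ha' & ->). simpl. apply upper1; auto; lia. }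
  assert (H2 : Rbar_le (Lub_Rbar E) (Finite (ln r / (1 + ln r)))).
  { apply Hlub. intros e (x' & p' & Ha' & ->). simpl. apply upper2; auto; lia. }
  destruct (Lub_Rbar E) as [e| |]; simpl in *; try contradiction.
  exists e. repeat split; lra.
Qed.

Theorem corollary2 :
  (forall K : nat, (2 <= K)%nat ->
     (forall r : R, 1 < r -> Rbar_lt (eta r K) (Finite (1 - 1 / INR K))) /\
     is_lim (fun r => real (eta r K)) p_infty (1 - 1 / INR K)) /\
  (forall r : R, 1 < r ->
     (forall K : nat, (2 <= K)%nat ->
        Rbar_le (eta r K) (Finite (ln r / (1 + ln r)))) /\
     is_lim_seq (fun K => real (eta r K)) (ln r / (1 + ln r))).
Proof.
  split.
  - intros K HK.
    set (m := INR (K - 1)).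
    assert (Hm : 1 <= m) by (unfold m; replace 1 with (INR 1) by reflexivity; apply le_INR; lia).
    assert (HKm : INR K = m + 1) by (unfold m; rewrite <- S_INR; f_equal; lia).
    assert (Hl : 1 - 1 / INR K = m / (m + 1)) by (rewrite HKm; field; lra).
    rewrite Hl. split.
    + intros r Hr. destruct (eta_bnd r K Hr HK) as (e & -> & _ & H1 & _). fold m in H1.
      simpl.
      assert (0 < 1 / r < 1).
      { split; [apply Rdiv_lt_0_compat; lra|].
        assert (1 / r < 1 / 1) by (apply frac_lt; lra). rewrite Rdiv_1_r in H. lra. }
      assert (m * (1 - 1 / r) / (1 + m * (1 - 1 / r)) < m / (m + 1)).
      { apply frac_lt; nra. }
      lra.
    + apply is_lim_spec. intros eps. simpl.
      pose proof (cond_pos eps) as He.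
      exists (exp (m * m / eps)). intros r Hr.
      assert (Hmm : 0 < m * m / eps) by (apply Rdiv_lt_0_compat; nra).
      assert (Hr1 : 1 < r) by (pose proof (exp_ineq1 _ (Rgt_not_eq _ _ Hmm)); lra).
      destruct (eta_bnd r K Hr1 HK) as (e & -> & H0 & H1 & _). fold m in H0, H1. simpl.
      set (a := ln r) in *.
      assert (Ha : m * m / eps < a).
      { unfold a. rewrite <- (ln_exp (m * m / eps)). apply ln_increasing; [apply exp_pos| lra]. }
      assert (Ha' : m * m < eps * a).
      { unfold Rdiv in Ha. apply (Rmult_lt_compat_l eps) in Ha; [|lra].
        replace (eps * (m * m * / eps)) with (m * m) in Ha by (field; lra). lra. }
      assert (0 < 1 / r < 1).
      { split; [apply Rdiv_lt_0_compat; lra|].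
        assert (1 / r < 1 / 1) by (apply frac_lt; lra). rewrite Rdiv_1_r in H. lra. }
      assert (Hup : m * (1 - 1 / r) / (1 + m * (1 - 1 / r)) < m / (m + 1)) by (apply frac_lt; nra).
      assert (Hpa : 0 < a) by lra.
      assert (Hdiff : m / (m + 1) - m * a / (m * a + m + a) = (m * m) / ((m + 1) * (m * a + m + a))).
      { field. split; nra. }
      assert (Hsm : m * m / ((m + 1) * (m * a + m + a)) < eps).
      { assert (m * m / ((m + 1) * (m * a + m + a)) < eps / 1) by (apply frac_lt; nra).
        rewrite Rdiv_1_r in H2. exact H2. }
      apply Rabs_def1; lra.
  - intros r Hr.
    assert (Ha : 0 < ln r) by (rewrite <- ln_1; apply ln_increasing; lra).
    set (a := ln r) in *.
    split.
    + intros K HK. destruct (eta_bnd r K Hr HK) as (e & -> & _ & _ & H2). simpl. exact H2.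
    + apply is_lim_seq_spec. intros eps. pose proof (cond_pos eps) as He.
      destruct (INR_unbounded (a * a / eps)) as [n0 Hn0].
      exists (S (S n0)). intros K HK.
      destruct (eta_bnd r K Hr ltac:(lia)) as (e & -> & H0 & _ & H2). simpl.
      fold a in H0, H2.
      set (m := INR (K - 1)) in *.
      assert (Hm : INR n0 <= m) by (unfold m; apply le_INR; lia).
      assert (Hm1 : 1 <= m) by (unfold m; replace 1 with (INR 1) by reflexivity; apply le_INR; lia).
      assert (Hma : a * a < eps * m).
      { assert (a * a / eps < m) by lra. unfold Rdiv in H. apply (Rmult_lt_compat_l eps) in H; [|lra].
        replace (eps * (a * a * / eps)) with (a * a) in H by (field; lra). lra. }
      assert (Hdiff : a / (1 + a) - m * a / (m * a + m + a) = (a * a) / ((1 + a) * (m * a + m + a))).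
      { field. split; nra. }
      assert (Hsm : a * a / ((1 + a) * (m * a + m + a)) < eps).
      { assert (a * a / ((1 + a) * (m * a + m + a)) < eps / 1) by (apply frac_lt; nra).
        rewrite Rdiv_1_r in H. exact H. }
      apply Rabs_def1; lra.
Qed.
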